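(* Let $n$ be even and let $g\in\mathbb{R}^n$, with order statistics $g_{(1)}\le g_{(2)}\le\dots\le g_{(n)}$. Let $\mathcal{S}\subseteq\{1,\dots,n\}$ be a solution of $$\max_{S\subseteq\{1,\dots,n\}}\ \sum_{i\in S} g_i\quad\text{subject to}\quad \sum_{i\in S} g_i\le\tfrac12\sum_{i=1}^n g_i,\quad |S|=\tfrac n2 .$$ Then $$\Big(\sum_{i\in\mathcal{S}}g_i-\sum_{i\in\mathcal{S}^c}g_i\Big)^2\le\sum_{i=1}^{n/2}\big(g_{(2i)}-g_{(2i-1)}\big)^2 .$$
   Context: In the paper $g_i=\mathbb{E}[Y_i(1)+Y_i(0)\mid X_i]$ for units with covariates $X_i$ and potential outcomes $Y_i(1),Y_i(0)$; the left side (divided by $n^2$) is the design-dependent part of the conditional variance of the IPW estimator under the design that assigns treatment $Z^*\sim\mathrm{Bern}(1/2)$ to all of $\mathcal{S}$ and $1-Z^*$ to all of $\mathcal{S}^c$, and the right side (divided by $n^2$) is the corresponding term for the matched-pair design pairing consecutive units sorted by $g$. $\mathcal{S}^c$ denotes the complement of $\mathcal{S}$ in $\{1,\dots,n\}$. *)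

(* Defs.v *)
From mathcomp Require Import all_boot all_order all_algebra.
Set Implicit Arguments. Unset Strict Implicit. Unset Printing Implicit Defensive.
Import Order.TTheory GRing.Theory Num.Theory.
Local Open Scope ring_scope.

(* Values g_1..g_n sorted nondecreasingly: (order_stats g)`_k = g_(k+1). *)
Definition order_stats (R : realFieldType) (n : nat) (g : 'I_n -> R) : seq R :=
  sort <=%R [seq g i | i <- enum 'I_n].

Definition feasible (R : realFieldType) (n : nat) (g : 'I_n -> R) (S : {set 'I_n}) : Prop :=
  #|S| = n./2 /\ \sum_(i in S) g i <= 2^-1 * \sum_i g i.

Definition is_solution (R : realFieldType) (n : nat) (g : 'I_n -> R) (S : {set 'I_n}) : Prop :=
  feasible g S /\ forall T : {set 'I_n}, feasible g T -> \sum_(i in T) g i <= \sum_(i in S) g i.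

(* Main.v *)
Require Import Defs.
From mathcomp Require Import all_boot all_order all_algebra.
From mathcomp Require Import lra.
Import Order.TTheory GRing.Theory Num.Theory.
Local Open Scope ring_scope.

Lemma pair_big (T : Type) (idx : T) (op : Monoid.com_law idx) m (F : nat -> T) :
  \big[op/idx]_(0 <= k < m.*2) F k = \big[op/idx]_(0 <= i < m) op (F i.*2) (F i.*2.+1).
Proof.
elim: m => [|m IH]; first by rewrite !big_geq.
rewrite doubleS !big_nat_recr //= IH; by rewrite Monoid.mulmA.
Qed.

Lemma greedy (R : realFieldType) (d : nat -> R) m : exists e : nat -> bool,
  (\sum_(0 <= i < m) (if e i then d i else - d i)) ^+ 2 <= \sum_(0 <= i < m) d i ^+ 2.
Proof.
elim: m => [|m [e He]].
  by exists (fun=> true); rewrite !big_geq // expr2 mul0r.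
set x := \sum_(0 <= i < m) _ in He.
exists (fun i => if i == m then x * d m <= 0 else e i).
rewrite !big_nat_recr //= eqxx.
have -> : \sum_(0 <= i < m) (if (if i == m then x * d m <= 0 else e i) then d i else - d i) = x.
  apply: eq_big_nat => i /andP [_ him].
  by rewrite (ltn_eqF him).
case: ifP => hb.
  nra.
move/negbT: hb; rewrite -ltNge => hb.
nra.
Qed.

Lemma greedy_pos (R : realFieldType) (d : nat -> R) m : exists e : nat -> bool,
  0 <= \sum_(0 <= i < m) (if e i then d i else - d i) /\
  (\sum_(0 <= i < m) (if e i then d i else - d i)) ^+ 2 <= \sum_(0 <= i < m) d i ^+ 2.
Proof.
have [e He] := @greedy R d m.
set x := \sum_(0 <= i < m) _ in He.
have [hx|hx] := leP 0 x; first by exists e.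
exists (fun i => ~~ e i).
have -> : \sum_(0 <= i < m) (if ~~ e i then d i else - d i) = - x.
  rewrite /x -sumrN; apply: eq_bigr => i _; by case: (e i); rewrite ?opprK.
rewrite sqrrN; split => //; lra.
Qed.

Lemma realize (R : realFieldType) n (g : 'I_n -> R) (P : pred nat) :
  exists U : {set 'I_n}, #|U| = #|[set k : 'I_n | P k]| /\
    \sum_(i in U) g i = \sum_(k < n | P k) (order_stats g)`_k /\
    \sum_i g i = \sum_(k < n) (order_stats g)`_k.
Proof.
case: n g => [|n] g.
  exists set0; split; first by rewrite cards0; symmetry; apply/eqP; rewrite -leqn0; apply: leq_trans (max_card _) _; by rewrite card_ord.
  by split; rewrite big1 ?[RHS]big1 // => -[].
set L := sort (relpre g <=%R) (enum 'I_n.+1).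
have hs : order_stats g = map g L by rewrite /order_stats sort_map.
have hperm : perm_eq L (enum 'I_n.+1) by rewrite perm_sort.
have huniq : uniq L by rewrite (perm_uniq hperm) enum_uniq.
have hsize : size L = n.+1 by rewrite (perm_size hperm) size_enum_ord.
pose sigma (k : 'I_n.+1) := nth ord0 L k.
have hinj : injective sigma.
  move=> i j; rewrite /sigma => /eqP; rewrite nth_uniq ?hsize //.
  by move/eqP/val_inj.
have hnth : forall k : 'I_n.+1, (order_stats g)`_k = g (sigma k).
  by move=> k; rewrite hs (nth_map ord0) // hsize.
exists (sigma @: [set k : 'I_n.+1 | P k]); split; first by rewrite card_imset.
split.
  rewrite big_imset; last by move=> i j _ _; apply: hinj.
  apply: eq_big => [k|k _]; first by rewrite inE.
  by rewrite hnth.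
rewrite (reindex_inj hinj) /=; apply: eq_bigr => k _; by rewrite hnth.
Qed.

Theorem theorem2 (R : realFieldType) (n : nat) (hn : ~~ odd n)
    (g : 'I_n -> R) (S : {set 'I_n}) (hS : is_solution g S) :
  (\sum_(i in S) g i - \sum_(i in ~: S) g i) ^+ 2
  <= \sum_(i < n./2) ((order_stats g)`_(i.*2.+1) - (order_stats g)`_(i.*2)) ^+ 2.
Proof.
case: hS => [[hcard hle] hmax].
set m := n./2.
have hn2 : n = m.*2 by have := odd_double_half n; rewrite (negbTE hn) add0n.
set f := fun k => (order_stats g)`_k.
pose d i := f i.*2.+1 - f i.*2.
have [e [h0 hsq]] := @greedy_pos R d m.
pose P := fun k => odd k != e k./2.
have [U [hU [hUs hT]]] := @realize R n g P.
have hP2 : forall i, P i.*2 = e i.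
  by move=> i; rewrite /P odd_double half_double; case: (e i).
have hP2S : forall i, P i.*2.+1 = ~~ e i.
  by move=> i; rewrite /P /= odd_double uphalf_double; case: (e i).
have hcardU : #|U| = m.
  rewrite hU -sum1_card big_mkcond /=.
  rewrite (eq_bigr (fun k : 'I_n => nat_of_bool (P k))); last first.
    by move=> k _; rewrite inE; case: (P k).
  rewrite -(big_mkord xpredT (fun k => nat_of_bool (P k))) hn2 pair_big.
  rewrite (eq_bigr (fun _ => 1%N)); last by move=> i _; rewrite hP2 hP2S; case: (e i).
  by rewrite sum_nat_const_nat subn0 muln1.
have hUs' : \sum_(i in U) g i = \sum_(0 <= i < m) (if e i then f i.*2 else f i.*2.+1).
  transitivity (\sum_(k < n | P k) f k); first exact: hUs.
  rewrite big_mkcond /=.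
  rewrite -(big_mkord xpredT (fun k => if P k then f k else 0)) hn2 pair_big.
  apply: eq_bigr => i _; rewrite /= hP2 hP2S; case: (e i) => /=; rewrite ?addr0 ?add0r //.
have hT' : \sum_i g i = \sum_(0 <= i < m) (f i.*2 + f i.*2.+1).
  by rewrite hT -(big_mkord xpredT f) hn2 pair_big.
have hx : \sum_i g i - 2 * \sum_(i in U) g i
          = \sum_(0 <= i < m) (if e i then d i else - d i).
  rewrite hT' hUs' mulr_sumr -sumrB; apply: eq_bigr => i _.
  rewrite /d; case: (e i); lra.
have hfeas : feasible g U.
  split; first by rewrite hcardU.
  lra.
have hSU := hmax U hfeas.
have hsplit : \sum_i g i = \sum_(i in S) g i + \sum_(i in ~: S) g i.
  rewrite (bigID (mem S)) /=; congr (_ + _); apply: eq_bigl => i; by rewrite inE.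
have -> : \sum_(i < n./2) ((order_stats g)`_(i.*2.+1) - (order_stats g)`_(i.*2)) ^+ 2
          = \sum_(0 <= i < m) d i ^+ 2.
  by rewrite big_mkord.
set X := \sum_(0 <= i < m) (if e i then d i else - d i) in h0 hsq hx.
set D := \sum_(0 <= i < m) d i ^+ 2 in hsq *.
nra.
Qed.
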